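(* Let $S\subseteq(0;1)$ be analytic. (a) $\widehat{\mathrm{Rng}}(\subseteq S)$ and $\widehat{\mathrm{Rng}}(\supseteq S)$ are $\boldsymbol{\Pi}^1_2$ subsets of $\mathrm{MALG}$. (b) If $S$ is Borel then $\widehat{\mathrm{Rng}}(\subseteq S)$ is $\boldsymbol{\Pi}^1_1$. (c) If $S$ is countable then $\widehat{\mathrm{Rng}}(\supseteq S)$ is $\boldsymbol{\Sigma}^1_1$.
   Context: $2^{\omega}$ is the Cantor space; $N_s=\{x\in2^\omega:s\subset x\}$; $\mu$ is the coin-tossing measure, $\mu(N_s)=2^{-\mathrm{lh}(s)}$. $\mathrm{MALG}$ is the measure algebra of Borel subsets of $2^\omega$ modulo null sets, a Polish space with metric $\delta([A],[B])=\mu(A\triangle B)$. For measurable $A$, $\mathcal{D}_A(z)=\lim_n\mu(A\cap N_{z\restriction n})/\mu(N_{z\restriction n})$ when it exists; $\operatorname{ran}\mathcal{D}_A$ is the set of values attained where defined (it depends only on $[A]$). $\widehat{\mathrm{Rng}}(\subseteq S)=\{[A]\in\mathrm{MALG}:\operatorname{ran}\mathcal{D}_A\subseteq S\cup\{0,1\}\}$ and $\widehat{\mathrm{Rng}}(\supseteq S)=\{[A]\in\mathrm{MALG}:S\subseteq\operatorname{ran}\mathcal{D}_A\}$. *)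

(* Defs.v *)
From HB Require Import structures.
From mathcomp Require Import all_boot all_order all_algebra.
From mathcomp Require Import all_classical all_reals all_analysis.
Set Implicit Arguments. Unset Strict Implicit. Unset Printing Implicit Defensive.
Import Order.TTheory GRing.Theory Num.Theory numFieldNormedType.Exports.
Local Open Scope classical_set_scope.
Local Open Scope ring_scope.

Definition cantor := nat -> bool.

Definition cyl (s : seq bool) : set cantor :=
  [set x | forall i, (i < size s)%N -> x i = nth false s i].

(* the clopen basis of cylinders; it generates the Borel sigma-algebra *)
Definition cylinders : set (set cantor) := [set N | exists s, N = cyl s].

Definition cantorB := g_sigma_algebraType cylinders.

Definition restr (x : cantor) (n : nat) : seq bool := mkseq x n.

(* mu is the coin-tossing measure: mu(N_s) = 2^{-lh s} (this determines mu) *)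
Definition coin_tossing (R : realType) (mu : set cantorB -> \bar R) :=
  forall s : seq bool, mu (cyl s) = ((2%:R : R) ^- size s)%:E.

Definition symdiff {T} (A B : set T) : set T := (A `\` B) `|` (B `\` A).

(* mu(A ∩ N_{z|n}) / mu(N_{z|n}) = 2^n mu(A ∩ N_{z|n}) *)
Definition dens_seq (R : realType) (mu : set cantorB -> \bar R)
    (A : set cantorB) (z : cantor) (n : nat) : R :=
  fine (mu (A `&` cyl (restr z n))) / ((2%:R : R) ^- n).

Definition ranD (R : realType) (mu : set cantorB -> \bar R) (A : set cantorB)
  : set R := [set r : R | exists z : cantor, (dens_seq mu A z : R^nat) @ \oo --> (r : R)].

(* Rng^(⊆ S) and Rng^(⊇ S), as sets of (Borel) representatives of MALG *)
Definition RngSub (R : realType) (mu : set cantorB -> \bar R) (S : set R)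
  : set (set cantorB) :=
  [set A | measurable A /\ ranD mu A `<=` S `|` [set 0; 1]].
Definition RngSup (R : realType) (mu : set cantorB -> \bar R) (S : set R)
  : set (set cantorB) :=
  [set A | measurable A /\ S `<=` ranD mu A].

(* A (pseudo)metrizable space is given by a carrier set P ⊆ T and its
   notion of sequential convergence conv.  Baire space ω^ω = nat -> nat
   with the product of discrete topologies. *)
Definition baire := nat -> nat.
Definition baire_conv (y : nat -> baire) (x : baire) : Prop :=
  forall i, exists K, forall k, (K <= k)%N -> y k i = x i.

Definition closed1 {T} (P : set T) (conv : (nat -> T) -> T -> Prop)
    (F : set (T * baire)) : Prop :=
  (forall p, F p -> P p.1) /\
  forall (a : nat -> T) (y : nat -> baire) (b : T) (x : baire),
    (forall k, F (a k, y k)) -> P b -> conv a b -> baire_conv y x -> F (b, x).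

Definition closed2 {T} (P : set T) (conv : (nat -> T) -> T -> Prop)
    (F : set (T * baire * baire)) : Prop :=
  (forall p, F p -> P p.1.1) /\
  forall (a : nat -> T) (y z : nat -> baire) (b : T) (x w : baire),
    (forall k, F (a k, y k, z k)) -> P b -> conv a b ->
    baire_conv y x -> baire_conv z w -> F (b, x, w).

Definition Sigma11 {T} (P : set T) conv (X : set T) : Prop :=
  exists F, closed1 P conv F /\ X = [set a | P a /\ exists y, F (a, y)].
Definition Pi11 {T} (P : set T) conv (X : set T) : Prop :=
  X `<=` P /\ Sigma11 P conv (P `\` X).
(* Σ^1_2: projections of Π^1_1 subsets of P × ω^ω; a Π^1_1 subset of
   P × ω^ω is {(a,y) | ∀ z, (a,y,z) ∉ F} with F ⊆ P × ω^ω × ω^ω closed *)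
Definition Sigma12 {T} (P : set T) conv (X : set T) : Prop :=
  exists F, closed2 P conv F /\
    X = [set a | P a /\ exists y, forall z, ~ F (a, y, z)].
Definition Pi12 {T} (P : set T) conv (X : set T) : Prop :=
  X `<=` P /\ Sigma12 P conv (P `\` X).

(* MALG: Borel sets modulo null sets, metric delta(A,B) = mu(A △ B) *)
Definition malg_conv (R : realType) (mu : set cantorB -> \bar R)
    (A : nat -> set cantorB) (B : set cantorB) : Prop :=
  (fun k => mu (symdiff (A k) B)) @ \oo --> 0%E.

Definition real_conv (R : realType) (u : nat -> R) (x : R) : Prop :=
  u @ \oo --> x.

Definition analytic (R : realType) (S : set R) : Prop :=
  Sigma11 setT (@real_conv R) S.

(* Main.v *)
Require Import Defs.
From HB Require Import structures.
From mathcomp Require Import all_boot all_order all_algebra.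
From mathcomp Require Import all_classical all_reals all_analysis.
From mathcomp Require Import ring lra zify.
From Stdlib Require Import Cantor.
Import Order.TTheory GRing.Theory Num.Theory numFieldNormedType.Exports.
Local Open Scope classical_set_scope.
Local Open Scope ring_scope.
Set Implicit Arguments. Unset Strict Implicit. Unset Printing Implicit Defensive.

Section Reals.
Variable R : realType.
Definition ecv (u : nat -> R) (r : R) := forall e : R, 0 < e ->
  exists K, forall k, (K <= k)%N -> `|u k - r| <= e.

Lemma ecvP u r : ecv u r <-> u @ \oo --> r.
Proof.
split.
- move=> h; apply/cvgrPdist_le => e e0; have [K hK] := h e e0.
  exists K => // k /= Kk; rewrite distrC; exact: hK.
- move=> /cvgrPdist_le h e e0; have [K _ hK] := h e e0.
  exists K => k Kk; rewrite distrC; exact: hK.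
Qed.

Definition iv (k : nat) : R := (k.+1%:R)^-1.

Lemma iv_gt0 k : 0 < iv k.
Proof. by rewrite /iv invr_gt0 ltr0n. Qed.

Lemma iv_le k m : (k <= m)%N -> iv m <= iv k.
Proof. move=> km; rewrite /iv lef_pV2 ?posrE ?ltr0n // ler_nat ltnS //. Qed.

Lemma iv_small e : 0 < e -> exists k, iv k <= e.
Proof.
move=> e0; exists (Num.bound (e^-1)).
have ie : 0 <= e^-1 by rewrite invr_ge0 ltW.
have h := archi_boundP ie.
have h2 : e^-1 <= (Num.bound e^-1).+1%:R.
  apply: (le_trans (ltW h)); rewrite ler_nat; exact: leqnSn.
rewrite /iv -[X in _ <= X]invrK lef_pV2 ?posrE ?invr_gt0 ?ltr0n //.
Qed.

Lemma le_ecv u v r t c : ecv u r -> ecv v t ->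
  (exists K, forall k, (K <= k)%N -> u k <= v k + c) -> r <= t + c.
Proof.
move=> hu hv [K hK]; rewrite leNgt; apply/negP => H.
set e := (r - t - c) / 3.
have e0 : 0 < e by rewrite /e; lra.
have [K1 h1] := hu e e0; have [K2 h2] := hv e e0.
set k := maxn K (maxn K1 K2).
have := h1 k; have := h2 k; have := hK k.
rewrite /k !leq_max !leqnn !orbT /= => a b c'.
move: (b isT) (c' isT); rewrite !ler_norml => /andP[b1 b2] /andP[c1 c2].
have := a isT; rewrite /e in b1 b2 c1 c2 *; lra.
Qed.

Lemma dist_ecv u v r t c : ecv u r -> ecv v t ->
  (exists K, forall k, (K <= k)%N -> `|u k - v k| <= c) -> `|r - t| <= c.
Proof.
move=> hu hv [K hK]; rewrite ler_norml; apply/andP; split.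
- have : t <= r + c.
    apply: (le_ecv hv hu); exists K => k /hK; rewrite ler_norml => /andP[a b]; lra.
  lra.
- have : r <= t + c.
    apply: (le_ecv hu hv); exists K => k /hK; rewrite ler_norml => /andP[a b]; lra.
  lra.
Qed.

Lemma ecv_cst c : ecv (fun _ => c) c.
Proof. by move=> e e0; exists 0%N => k _; rewrite subrr normr0 ltW. Qed.

Lemma ecv_unique u r t : ecv u r -> ecv u t -> r = t.
Proof.
move=> h1 h2; have : `|r - t| <= 0.
  by apply: (dist_ecv h1 h2); exists 0%N => k _; rewrite subrr normr0.
by rewrite normr_le0 subr_eq0 => /eqP.
Qed.

Lemma ecv_shift u r K : ecv u r -> ecv (fun k => u (k + K)%N) r.
Proof.
move=> h e e0; have [K1 h1] := h e e0; exists K1 => k k1; apply: h1.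
exact: (leq_trans k1 (leq_addr _ _)).
Qed.

Lemma rate_cvg (u : nat -> R) (N : nat -> nat) :
  (forall k n m, (N k <= n)%N -> (N k <= m)%N -> `|u n - u m| <= iv k) ->
  ecv u (lim (u @ \oo)) /\
  forall k n, (N k <= n)%N -> `|u n - lim (u @ \oo)| <= iv k.
Proof.
move=> hV.
have cv : cvg (u @ \oo).
  apply/cauchy_cvgP/cauchy_exP => e e0.
  have [k hk] : exists k, iv k <= e / 2 by apply: iv_small; lra.
  exists (u (N k)); exists (N k) => // n /= hn.
  rewrite /ball /= distrC; apply: (le_lt_trans (hV k n (N k) hn (leqnn _))).
  apply: (le_lt_trans hk); lra.
have ecvl : ecv u (lim (u @ \oo)) by apply/ecvP.
split => // k n hn.
apply: (dist_ecv (ecv_cst (u n)) ecvl); exists (N k) => m hm.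
exact: hV.
Qed.

Lemma ecv_rate u r : ecv u r -> exists N : nat -> nat,
  forall k n, (N k <= n)%N -> `|u n - r| <= iv k.
Proof.
move=> h.
have : forall k, exists K, forall n, (K <= n)%N -> `|u n - r| <= iv k.
  move=> k; exact: h _ (iv_gt0 k).
by move/choice => [N hN]; exists N.
Qed.

Lemma rate_ecv u r (N : nat -> nat) :
  (forall k n, (N k <= n)%N -> `|u n - r| <= iv k) -> ecv u r.
Proof.
move=> h e e0; have [k hk] := iv_small e0; exists (N k) => n hn.
exact: le_trans (h k n hn) hk.
Qed.

End Reals.

Definition tl (y : baire) : baire := fun i => y i.+1.
Definition cns (n : nat) (y : baire) : baire := fun i => if i is i'.+1 then y i' else n.
Definition ev (y : baire) : baire := fun i => y (i.*2).
Definition od (y : baire) : baire := fun i => y (i.*2.+1).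
Definition mrg (y1 y2 : baire) : baire := fun i => if odd i then y2 i./2 else y1 i./2.
Definition prj (i : nat) (y : baire) : baire := fun j => y (Cantor.to_nat (i, j)).
Definition jn (ys : nat -> baire) : baire :=
  fun n => ys (Cantor.of_nat n).1 (Cantor.of_nat n).2.
Definition bnat (z : cantor) : baire := fun i => nat_of_bool (z i).
Definition zb (y : baire) : cantor := fun i => y i != 0%N.

Lemma tl_cns n y : tl (cns n y) = y. Proof. by []. Qed.
Lemma cns0 n y : cns n y 0 = n. Proof. by []. Qed.
Lemma ev_mrg y1 y2 : ev (mrg y1 y2) = y1.
Proof. by apply: funext => i; rewrite /ev /mrg odd_double doubleK. Qed.
Lemma od_mrg y1 y2 : od (mrg y1 y2) = y2.
Proof.
apply: funext => i; rewrite /od /mrg /= odd_double /=.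
by rewrite uphalf_double.
Qed.
Lemma prj_jn i ys : prj i (jn ys) = ys i.
Proof. by apply: funext => j; rewrite /prj /jn cancel_of_to. Qed.
Lemma zb_bnat z : zb (bnat z) = z.
Proof. by apply: funext => i; rewrite /zb /bnat; case: (z i). Qed.

Lemma bc_re (g : nat -> nat) (y : nat -> baire) x : baire_conv y x ->
  baire_conv (fun k i => y k (g i)) (fun i => x (g i)).
Proof. by move=> h i; exact: h. Qed.

Lemma bc_prefix (y : nat -> baire) x n : baire_conv y x ->
  exists K, forall k, (K <= k)%N -> forall i, (i < n)%N -> y k i = x i.
Proof.
move=> h; elim: n => [|n [K hK]]; first by exists 0%N.
have [K' hK'] := h n; exists (maxn K K') => k; rewrite geq_max => /andP[a b] i.
rewrite ltnS leq_eqVlt => /orP[/eqP -> |]; first exact: hK'.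
exact: hK.
Qed.

Lemma bc_shift (y : nat -> baire) x K : baire_conv y x -> baire_conv (fun k => y (k + K)%N) x.
Proof.
move=> h i; have [K1 h1] := h i; exists K1 => k k1; apply: h1.
exact: (leq_trans k1 (leq_addr _ _)).
Qed.

Lemma bc_cst x : baire_conv (fun _ => x) x.
Proof. by move=> i; exists 0%N. Qed.

Lemma restr_eq (z z' : cantor) n : (forall i, (i < n)%N -> z i = z' i) ->
  restr z n = restr z' n.
Proof.
move=> h; rewrite /restr /mkseq.
apply: (iffLR (eq_in_map (z : nat -> bool) z' _)) => i.
rewrite mem_iota add0n => /andP[_ hi]; exact: h.
Qed.

Definition ev_hold (Q : nat -> Prop) := exists K, forall k, (K <= k)%N -> Q k.

Lemma ev_and (Q1 Q2 : nat -> Prop) : ev_hold Q1 -> ev_hold Q2 ->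
  ev_hold (fun k => Q1 k /\ Q2 k).
Proof.
move=> [K1 h1] [K2 h2]; exists (maxn K1 K2) => k; rewrite geq_max => /andP[a b].
by split; [exact: h1|exact: h2].
Qed.

Lemma ev_mono (Q1 Q2 : nat -> Prop) : ev_hold Q1 -> (forall k, Q1 k -> Q2 k) -> ev_hold Q2.
Proof. by move=> [K h] h12; exists K => k /h /h12. Qed.

Lemma ev_true : ev_hold (fun _ => True). Proof. by exists 0%N. Qed.

Section Clo.
Variables (T : Type) (P : set T) (cv : (nat -> T) -> T -> Prop).
Definition cloE (G : T -> Prop) := forall (a : nat -> T) b,
  (forall k, P (a k)) -> ev_hold (fun k => G (a k)) -> P b -> cv a b -> G b.
End Clo.

Definition pP T (P : set T) : set (T * baire) := fun p => P p.1.
Definition pC T (cv : (nat -> T) -> T -> Prop) :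
  (nat -> T * baire) -> T * baire -> Prop :=
  fun a b => cv (fun k => (a k).1) b.1 /\ baire_conv (fun k => (a k).2) b.2.

Lemma cloE_closed1 T (P : set T) cv (G : T * baire -> Prop) :
  cloE (pP P) (pC cv) G -> closed1 P cv [set p | P p.1 /\ G p].
Proof.
move=> hG; split; first by move=> p [].
move=> a y b x hF Pb ca cy; split => //.
apply: (hG (fun k => (a k, y k)) (b, x)) => //.
- by move=> k; exact: (hF k).1.
- by exists 0%N => k _; exact: (hF k).2.
Qed.

Lemma cloE_closed2 T (P : set T) cv (G : T * baire * baire -> Prop) :
  cloE (pP (pP P)) (pC (pC cv)) G -> closed2 P cv [set p | P p.1.1 /\ G p].
Proof.
move=> hG; split; first by move=> p [].
move=> a y z b x w hF Pb ca cy cz; split => //.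
apply: (hG (fun k => (a k, y k, z k)) (b, x, w)) => //.
- by move=> k; exact: (hF k).1.
- by exists 0%N => k _; exact: (hF k).2.
Qed.

Definition sel T (Gs : nat -> T * baire -> Prop) (p : T * baire) : Prop :=
  Gs (p.2 0%N) (p.1, tl p.2).

Lemma cloE_sel T (P : set T) cv (Gs : nat -> T * baire -> Prop) :
  (forall i, cloE (pP P) (pC cv) (Gs i)) -> cloE (pP P) (pC cv) (sel Gs).
Proof.
move=> hG a b Pa hev Pb [c1 c2]; rewrite /sel.
have [K hK] := c2 0%N.
apply: (hG (b.2 0%N) (fun k => ((a k).1, tl (a k).2)) (b.1, tl b.2)) => //.
- have [K2 hK2] := hev; exists (maxn K K2) => k; rewrite geq_max => /andP[k1 k2].
  by have := hK2 k k2; rewrite /sel /= (hK k k1).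
- split => //=; exact: (bc_re S c2).
Qed.

Lemma cloE_and T (P : set T) cv (G1 G2 : T -> Prop) :
  cloE P cv G1 -> cloE P cv G2 -> cloE P cv (fun p => G1 p /\ G2 p).
Proof.
move=> h1 h2 a b Pa hev Pb c; split.
- exact: (h1 a b Pa (ev_mono hev (fun k h => proj1 h)) Pb c).
- exact: (h2 a b Pa (ev_mono hev (fun k h => proj2 h)) Pb c).
Qed.

Lemma cloE_all T (P : set T) cv I (G : I -> T -> Prop) :
  (forall i, cloE P cv (G i)) -> cloE P cv (fun p => forall i, G i p).
Proof.
move=> h a b Pa hev Pb c i.
exact: (h i a b Pa (ev_mono hev (fun k h => h i)) Pb c).
Qed.

Lemma FS_close (R : realType) (F : set (R * baire)) (a : nat -> R) (y : nat -> baire) b x :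
  closed1 setT (@real_conv R) F -> ev_hold (fun k => F (a k, y k)) ->
  ecv a b -> baire_conv y x -> F (b, x).
Proof.
move=> [_ hF] [K hK] ca cy.
apply: (hF (fun k => a (k + K)%N) (fun k => y (k + K)%N)) => //.
- by move=> k; apply: hK; exact: leq_addl.
- by rewrite /real_conv; apply/ecvP; exact: ecv_shift.
- exact: bc_shift.
Qed.

Section More.
Variable R : realType.

Lemma ecv_distf (u v : nat -> R) r t : ecv u r -> ecv v t ->
  ecv (fun k => `|u k - v k|) `|r - t|.
Proof.
move=> hu hv e e0.
have [K1 h1] := hu (e/2) ltac:(lra); have [K2 h2] := hv (e/2) ltac:(lra).
exists (maxn K1 K2) => k; rewrite geq_max => /andP[k1 k2].
apply: (le_trans (ler_dist_dist _ _)).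
have -> : u k - v k - (r - t) = (u k - r) - (v k - t) by ring.
apply: (le_trans (ler_normB _ _)).
have := h1 k k1; have := h2 k k2; lra.
Qed.

Lemma ge_ecv (u v : nat -> R) r t c : ecv u r -> ecv v t ->
  ev_hold (fun k => c <= `|u k - v k|) -> c <= `|r - t|.
Proof.
move=> hu hv [K hK].
have hw := ecv_distf hu hv.
have H : exists K, forall k, (K <= k)%N -> c <= `|u k - v k| + 0.
  by exists K => k hk; rewrite addr0; exact: hK k hk.
by have := le_ecv (ecv_cst c) hw H; rewrite addr0.
Qed.

Lemma iv_double k : iv R k.*2.+1 + iv R k.*2.+1 = iv R k.
Proof.
rewrite /iv.
have -> : (k.*2.+1).+1 = (2 * k.+1)%N by lia.
rewrite natrM.
have h : (k.+1%:R : R) != 0 by rewrite pnatr_eq0.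
field; by rewrite addrC natr1 pnatr_eq0.
Qed.

Lemma norm3 (a b c d e1 e2 e3 : R) : `|a - b| <= e1 -> `|b - c| <= e2 -> `|c - d| <= e3 ->
  `|a - d| <= e1 + e2 + e3.
Proof. rewrite !ler_norml => /andP[? ?] /andP[? ?] /andP[? ?]; apply/andP; split; lra. Qed.

End More.

Section Cauchy.
Variables (R : realType) (T : Type) (P : set T) (cv : (nat -> T) -> T -> Prop).
Variables (s : T -> nat -> R) (Nf : T -> nat -> nat).
Hypothesis scont : forall a b, (forall k, P (a k)) -> P b -> cv a b ->
  forall n, ecv (fun k => s (a k) n) (s b n).
Hypothesis Ncont : forall a b, (forall k, P (a k)) -> P b -> cv a b ->
  forall k, ev_hold (fun j => Nf (a j) k = Nf b k).

Definition Vg p := forall k n m, (Nf p k <= n)%N -> (Nf p k <= m)%N ->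
  `|s p n - s p m| <= iv R k.
Definition lmg p := lim (s p @ \oo).
Definition Badg p (w : baire) :=
  [/\ (Nf p (w 0%N) <= w 1%N)%N, (Nf p (w 0%N) <= w 2%N)%N &
      iv R (w 0%N) + iv R (w 3%N) <= `|s p (w 1%N) - s p (w 2%N)|].

Lemma Vg_lim p : Vg p -> forall k n, (Nf p k <= n)%N -> `|s p n - lmg p| <= iv R k.
Proof. by move=> h; have [] := rate_cvg h. Qed.

Lemma Vg_ecv p : Vg p -> ecv (s p) (lmg p).
Proof. by move=> h; have [] := rate_cvg h. Qed.

Lemma Vg_closed : cloE P cv Vg.
Proof.
move=> a b Pa hev Pb c k n m h1 h2.
have hN := Ncont Pa Pb c k.
apply: (dist_ecv (scont Pa Pb c n) (scont Pa Pb c m)).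

apply: (ev_mono (ev_and hev hN)) => j [hV hNj]; apply: hV; rewrite hNj //.
Qed.

Lemma lmg_cont a b : (forall k, P (a k)) -> P b -> cv a b ->
  ev_hold (fun k => Vg (a k)) -> Vg b -> ecv (fun k => lmg (a k)) (lmg b).
Proof.
move=> Pa Pb c hev Vb e e0.
have [k hk] : exists k, iv R k <= e / 3 by apply: iv_small; lra.
set N := Nf b k.
have e3 : 0 < e/3 by lra.
have [K1 h1] := scont Pa Pb c N e3.
have [K2 h2] := ev_and hev (Ncont Pa Pb c k).
exists (maxn K1 K2) => j; rewrite geq_max => /andP[j1 j2].
have [hV hN] := h2 j j2.
have a1 : `|lmg (a j) - s (a j) N| <= iv R k.
  by rewrite distrC; apply: Vg_lim => //; rewrite hN.
have a2 := h1 j j1.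
have a3 : `|s b N - lmg b| <= iv R k by apply: Vg_lim.
have := norm3 a1 a2 a3; lra.
Qed.

Lemma Badg_closed a b (w : nat -> baire) w0 : (forall k, P (a k)) -> P b -> cv a b ->
  baire_conv w w0 -> ev_hold (fun k => Badg (a k) (w k)) -> Badg b w0.
Proof.
move=> Pa Pb c cw hev.
have [K1 h1] := bc_prefix 4 cw.
have h2 := Ncont Pa Pb c (w0 0%N).
have hev2 : ev_hold (fun k => Badg (a k) w0).
  apply: (ev_mono (ev_and (ev_and hev (ex_intro _ K1 h1)) h2)) => k [[hB hw] _].
  by move: hB; rewrite /Badg !hw.
have [K3 h3] := ev_and hev2 h2.
have [[b1 b2 b3] e3] := h3 K3 (leqnn _).
split.
- by rewrite -e3.
- by rewrite -e3.
- apply: (ge_ecv (scont Pa Pb c (w0 1%N)) (scont Pa Pb c (w0 2%N))).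
  by apply: (ev_mono hev2) => k [].
Qed.

Lemma Badg_notV p w : Badg p w -> ~ Vg p.
Proof.
move=> [b1 b2 b3] hV; have := hV _ _ _ b1 b2.
have := iv_gt0 R (w 3%N); lra.
Qed.

Lemma notV_Badg p : ~ Vg p -> exists w, Badg p w.
Proof.
move=> hV; apply: contrapT => hB; apply: hV => k n m h1 h2.
rewrite leNgt; apply/negP => hlt.
have [j hj] : exists j, iv R j <= `|s p n - s p m| - iv R k by apply: iv_small; lra.
apply: hB; exists (fun i => match i with 0 => k | 1 => n | 2 => m | _ => j end)%N.
split => //=; lra.
Qed.

Lemma rate_Vg p r : (forall k n, (Nf p k <= n)%N -> `|s p n - r| <= iv R k.*2.+1) ->
  Vg p /\ lmg p = r.
Proof.
move=> h.
have hV : Vg p.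
  move=> k n m h1 h2; rewrite -iv_double.
  have := h k n h1; have := h k m h2; rewrite distrC => a1 a2.
  apply: (le_trans (ler_distD r _ _)); exact: lerD a2 a1.
split => //; apply: (ecv_unique (Vg_ecv hV)).
apply: (rate_ecv (N := fun k => Nf p k.*2.+1)) => k n hn.
apply: (le_trans (h _ _ hn)); apply: iv_le; lia.
Qed.

End Cauchy.

Lemma cyl_meas s : measurable (cyl s : set cantorB).
Proof. apply: sub_sigma_algebra; by exists s. Qed.

Section Malg.
Variables (R : realType) (mu : {measure set cantorB -> \bar R}).
Hypothesis Hmu : coin_tossing mu.

Lemma cyl_nil : (cyl [::] : set cantorB) = setT.
Proof. by apply/seteqP; split => x //= _ i. Qed.

Lemma mu_setT : mu setT = 1%E.
Proof. by rewrite -cyl_nil Hmu /= expr0 invr1. Qed.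

Lemma mfin (A : set cantorB) : measurable A ->
  mu A = (fine (mu A))%:E /\ 0 <= fine (mu A) <= 1.
Proof.
move=> mA.
have h1 : (mu A <= 1)%E.
  rewrite -mu_setT; apply: le_measure => //; rewrite inE //.
have h0 := measure_ge0 mu A.
have fA : mu A \is a fin_num.
  by rewrite ge0_fin_numE // (le_lt_trans h1) // ltry.
split; first by rewrite fineK.
by rewrite -lee_fin -[X in _ && X]lee_fin fineK // h0 h1.
Qed.

Lemma meas_sym (A B : set cantorB) : measurable A -> measurable B ->
  measurable (symdiff A B).
Proof. by move=> mA mB; apply: measurableU; apply: measurableD. Qed.

Lemma mdiff1 (A B C : set cantorB) : measurable A -> measurable B -> measurable C ->
  fine (mu (A `&` C)) <= fine (mu (B `&` C)) + fine (mu (symdiff A B)).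
Proof.
move=> mA mB mC.
have mAC : measurable (A `&` C) by apply: measurableI.
have mBC : measurable (B `&` C) by apply: measurableI.
have mS := meas_sym mA mB.
have [e1 _] := mfin mAC; have [e2 _] := mfin mBC; have [e3 _] := mfin mS.
rewrite -lee_fin EFinD -e1 -e2 -e3.
apply: (le_trans _ (measureU2 mu mBC mS)).
apply: le_measure; rewrite ?inE //; first exact: measurableU.
move=> x [ax cx]; case: (pselect (B x)) => bx; first by left.
by right; left.
Qed.

Lemma symdiffC (A B : set cantorB) : symdiff A B = symdiff B A.
Proof. by rewrite /symdiff setUC. Qed.

Lemma mdiff (A B C : set cantorB) : measurable A -> measurable B -> measurable C ->
  `|fine (mu (A `&` C)) - fine (mu (B `&` C))| <= fine (mu (symdiff A B)).
Proof.
move=> mA mB mC; have h1 := mdiff1 mA mB mC; have h2 := mdiff1 mB mA mC.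
rewrite symdiffC in h2; rewrite ler_norml; apply/andP; split; lra.
Qed.

Lemma malg_ecv (A : nat -> set cantorB) B : (forall k, measurable (A k)) -> measurable B ->
  malg_conv mu A B -> ecv (fun k => fine (mu (symdiff (A k) B))) 0.
Proof.
move=> mA mB /fine_cvgP [_ h]; apply/ecvP; exact: h.
Qed.

Lemma pow2_gt0 n : 0 < ((2%:R : R) ^- n).
Proof. by rewrite invr_gt0 exprn_gt0 // ltr0n. Qed.

Lemma dens_cont (A : nat -> set cantorB) B (z : nat -> cantor) z0 :
  (forall k, measurable (A k)) -> measurable B -> malg_conv mu A B ->
  forall n, ev_hold (fun k => forall i, (i < n)%N -> z k i = z0 i) ->
  ecv (fun k => dens_seq mu (A k) (z k) n) (dens_seq mu B z0 n).
Proof.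
move=> mA mB cAB n hz e e0.
have c0 := pow2_gt0 n.
set c := (2%:R : R) ^- n in c0 *.
have ec : 0 < e * c by apply: mulr_gt0.
have [K1 h1] := malg_ecv mA mB cAB ec.
have [K2 h2] := hz.
exists (maxn K1 K2) => k; rewrite geq_max => /andP[k1 k2].
rewrite /dens_seq (restr_eq (h2 k k2)) -/c.
have mC : measurable (cyl (restr z0 n) : set cantorB) := cyl_meas _.
have ic : 0 < c^-1 by rewrite invr_gt0.
rewrite -mulrBl normrM (gtr0_norm ic).
have a := mdiff (mA k) mB mC.
have b := h1 k k1; rewrite subr0 in b.
have [_ /andP[s0 _]] := mfin (meas_sym (mA k) mB).
rewrite (ger0_norm s0) in b.
by rewrite ler_pdivrMr //; exact: (le_trans a b).
Qed.

End Malg.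

Lemma ecv_evc (R : realType) (u : nat -> R) c : ev_hold (fun k => u k = c) -> ecv u c.
Proof. by move=> [K hK] e e0; exists K => k /hK ->; rewrite subrr normr0 ltW. Qed.

Lemma pow2_le_iv (R : realType) n : ((2%:R : R) ^- n) <= iv R n.
Proof.
rewrite /iv lef_pV2 ?posrE ?exprn_gt0 ?ltr0n //.
rewrite -natrX ler_nat; elim: n => // n ih; rewrite expnS; lia.
Qed.

Lemma trunc_approx (R : realType) (r : R) n : 0 <= r ->
  `|(Num.Def.truncn (r * 2%:R ^+ n))%:R * (2%:R ^- n) - r| <= (2%:R : R) ^- n.
Proof.
move=> r0.
have p0 : 0 < (2%:R : R) ^+ n by rewrite exprn_gt0 // ltr0n.
have rp : 0 <= r * 2%:R ^+ n by rewrite mulr_ge0 // ltW.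
have /andP[h1 h2] := truncn_itv rp.
set t := (Num.Def.truncn (r * 2%:R ^+ n))%:R in h1 h2 *.
rewrite -natr1 in h2.
have ip : 0 < ((2%:R : R) ^+ n)^-1 by rewrite invr_gt0.
have e1 : t * ((2%:R : R) ^+ n)^-1 <= r.
  by rewrite ler_pdivrMr.
have e2 : r - ((2%:R : R) ^+ n)^-1 < t * ((2%:R : R) ^+ n)^-1.
  have key : (r * 2%:R ^+ n - 1) * ((2%:R : R) ^+ n)^-1 < t * ((2%:R : R) ^+ n)^-1.
    by rewrite ltr_pM2r //; lra.
  by rewrite mulrBl mul1r -mulrA mulfV ?gt_eqF // mulr1 in key.
rewrite ler_norml; apply/andP; split; lra.
Qed.

Section Inst.
Variables (R : realType) (mu : {measure set cantorB -> \bar R}).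
Hypothesis Hmu : coin_tossing mu.

Definition T1 := (set cantorB * baire)%type.
Definition P1 : set T1 := pP (measurable : set (set cantorB)).
Definition cv1 : (nat -> T1) -> T1 -> Prop := pC (malg_conv mu).

Definition s1 (p : T1) (n : nat) : R := dens_seq mu p.1 (zb (ev p.2)) n.
Definition N1 (p : T1) : nat -> nat := od p.2.

Lemma scont1 a b : (forall k, P1 (a k)) -> P1 b -> cv1 a b ->
  forall n, ecv (fun k => s1 (a k) n) (s1 b n).
Proof.
move=> Pa Pb [c1 c2] n; rewrite /s1.
apply: (dens_cont Hmu (A := fun k => (a k).1)) => //.
have [K hK] := bc_prefix n (bc_re (fun i => i.*2) c2).
by exists K => k hk i hi; rewrite /zb /ev (hK k hk i hi).
Qed.

Lemma Ncont1 a b : (forall k, P1 (a k)) -> P1 b -> cv1 a b ->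
  forall k, ev_hold (fun j => N1 (a j) k = N1 b k).
Proof. by move=> Pa Pb [c1 c2] k; apply: c2. Qed.

Definition sR (p : T1) (n : nat) : R := (ev p.2 n)%:R * (2%:R ^- n).
Definition NR (p : T1) (k : nat) : nat := k.*2.+1.

Lemma scontR a b : (forall k, P1 (a k)) -> P1 b -> cv1 a b ->
  forall n, ecv (fun k => sR (a k) n) (sR b n).
Proof.
move=> Pa Pb [c1 c2] n; apply: ecv_evc.
have [K hK] := c2 (n.*2); exists K => k hk.
by rewrite /sR /ev (hK k hk).
Qed.

Lemma NcontR a b : (forall k, P1 (a k)) -> P1 b -> cv1 a b ->
  forall k, ev_hold (fun j => NR (a j) k = NR b k).
Proof. by move=> *; exists 0%N. Qed.

Definition ConvW (A : set cantorB) (r : R) (u : baire) :=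
  forall k n, (od u k <= n)%N -> `|dens_seq mu A (zb (ev u)) n - r| <= iv R k.

Lemma ConvW_close (A : nat -> set cantorB) B (r : nat -> R) r0 (u : nat -> baire) u0 :
  (forall k, measurable (A k)) -> measurable B -> malg_conv mu A B ->
  ecv r r0 -> baire_conv u u0 -> ev_hold (fun k => ConvW (A k) (r k) (u k)) ->
  ConvW B r0 u0.
Proof.
move=> mA mB cAB cr cu hev k n hn.
have hs : ecv (fun j => dens_seq mu (A j) (zb (ev (u j))) n) (dens_seq mu B (zb (ev u0)) n).
  apply: (dens_cont Hmu) => //.
  have [K hK] := bc_prefix n (bc_re (fun i => i.*2) cu).
  by exists K => j hj i hi; rewrite /zb /ev (hK j hj i hi).
apply: (dist_ecv hs cr).
have [K hK] := cu (k.*2.+1).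
apply: (ev_mono (ev_and hev (ex_intro _ K hK))) => j [hC hj].
apply: hC; rewrite /od hj //.
Qed.

Lemma ConvW_ranD A r u : ConvW A r u -> ranD mu A r.
Proof.
move=> h; exists (zb (ev u)); apply/ecvP; exact: (rate_ecv h).
Qed.

Lemma ranD_ConvW A r : ranD mu A r -> exists u, ConvW A r u.
Proof.
move=> [z /ecvP hz]; have [N hN] := ecv_rate hz.
exists (mrg (bnat z) N); rewrite /ConvW ev_mrg od_mrg zb_bnat; exact: hN.
Qed.

End Inst.

Lemma notF_Gopen (R : realType) (F : set (R * baire)) r v :
  closed1 setT (@real_conv R) F -> ~ F (r, v) ->
  exists m : nat, forall r' v', F (r', v') ->
    iv R m <= `|r' - r| \/ exists2 i, (i < m)%N & v' i <> v i.
Proof.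
move=> cF nF; apply: contrapT => hm; apply: nF.
have h : forall m : nat, exists p : R * baire, F p /\ `|p.1 - r| < iv R m /\
    forall i, (i < m)%N -> p.2 i = v i.
  move=> m; apply: contrapT => hn; apply: hm; exists m => r' v' Fp.
  case: (pselect (forall i, (i < m)%N -> v' i = v i)) => hv.
  - left; rewrite leNgt; apply/negP => hlt; apply: hn; by exists (r', v').
  - right; apply: contrapT => hh; apply: hv => i hi.
    by apply: contrapT => hne; apply: hh; exists i.
have [f hf] := choice h.
apply: (FS_close (a := fun m => (f m).1) (y := fun m => (f m).2) cF).
- by exists 0%N => k _; rewrite -surjective_pairing; exact: (hf k).1.
- move=> e e0; have [k hk] := iv_small e0; exists k => m km.
  have [_ [h1 _]] := hf m; apply: ltW; apply: (lt_le_trans h1).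
  exact: le_trans (iv_le _ km) hk.
- move=> i; exists i.+1 => m km; have [_ [_ h2]] := hf m; exact: h2.
Qed.

Section PartA1.
Variables (R : realType) (mu : {measure set cantorB -> \bar R}).
Hypothesis Hmu : coin_tossing mu.

Definition GA1 (F : set (R * baire)) (i : nat) (q : T1 * baire) : Prop :=
  match i with
  | O => Badg (s1 mu) N1 q.1 q.2
  | S O => Vg (s1 mu) N1 q.1 /\ F (lmg (s1 mu) q.1, q.2)
  | S (S O) => Vg (s1 mu) N1 q.1 /\ lmg (s1 mu) q.1 = 0
  | _ => Vg (s1 mu) N1 q.1 /\ lmg (s1 mu) q.1 = 1
  end.

Let sc := scont1 Hmu.
Let nc := @Ncont1 R mu.

Lemma GA1_closed F : closed1 setT (@real_conv R) F ->
  forall i, cloE (pP P1) (pC (cv1 mu)) (GA1 F i).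
Proof.
move=> cF [|[|[|i]]] a b Pa hev Pb [c1 c2] /=.
- exact: (Badg_closed sc nc Pa Pb c1 c2 hev).
- have hV : Vg (s1 mu) N1 b.1 :=
    Vg_closed sc nc Pa (ev_mono hev (fun k h => proj1 h)) Pb c1.
  split => //.
  apply: (FS_close (a := fun k => lmg (s1 mu) (a k).1) (y := fun k => (a k).2) cF
     (ev_mono hev (fun k h => proj2 h))) => //.
  exact: (lmg_cont sc nc Pa Pb c1 (ev_mono hev (fun k h => proj1 h)) hV).
- have hV : Vg (s1 mu) N1 b.1 :=
    Vg_closed sc nc Pa (ev_mono hev (fun k h => proj1 h)) Pb c1.
  split => //.
  apply: (ecv_unique (lmg_cont sc nc Pa Pb c1 (ev_mono hev (fun k h => proj1 h)) hV)).
  exact: ecv_evc (ev_mono hev (fun k h => proj2 h)).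
- have hV : Vg (s1 mu) N1 b.1 :=
    Vg_closed sc nc Pa (ev_mono hev (fun k h => proj1 h)) Pb c1.
  split => //.
  apply: (ecv_unique (lmg_cont sc nc Pa Pb c1 (ev_mono hev (fun k h => proj1 h)) hV)).
  exact: ecv_evc (ev_mono hev (fun k h => proj2 h)).
Qed.

Lemma ConvW_Vg A r u : ConvW mu A r u ->
  let u' := mrg (ev u) (fun k => od u k.*2.+1) in
  Vg (s1 mu) N1 (A, u') /\ lmg (s1 mu) (A, u') = r.
Proof.
move=> hu u'; apply: rate_Vg => k n; rewrite /N1 /s1 /u' /= od_mrg ev_mrg.
exact: hu.
Qed.

Lemma partA1 (S : set R) : analytic S -> Pi12 measurable (malg_conv mu) (RngSub mu S).
Proof.
move=> [F [cF eS]]; split; first by move=> A [].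
exists [set p | measurable p.1.1 /\ sel (GA1 F) p]; split.
  by apply: cloE_closed2; exact: (cloE_sel (GA1_closed cF)).
apply/seteqP; split.
- move=> A [mA nSub]; split => //.
  have [r [hr nr]] : exists r, ranD mu A r /\ ~ (S `|` [set 0; 1]) r.
    apply: contrapT => h; apply: nSub; split => // r hr.
    by apply: contrapT => hn; apply: h; exists r.
  have [u hu] := ranD_ConvW hr.
  have [hV hL] := ConvW_Vg hu.
  exists (mrg (ev u) (fun k => od u k.*2.+1)) => w [_]; rewrite /sel /=.
  case: (w 0%N) => [|[|[|i]]] /=.
  + by move=> hB; exact: (Badg_notV hB hV).
  + move=> [_ hF]; apply: nr; left; rewrite eS; split => //.
    by rewrite -hL; exists (tl w).
  + by move=> [_ h0]; apply: nr; right; rewrite -hL h0; left.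
  + by move=> [_ h0]; apply: nr; right; rewrite -hL h0; right.
- move=> A [mA [y hy]]; split => //; move=> [_ hsub].
  have hV : Vg (s1 mu) N1 (A, y).
    apply: contrapT => nV; have [w hw] := notV_Badg nV.
    by apply: (hy (cns 0 w)); split.
  have hr : ranD mu A (lmg (s1 mu) (A, y)).
    by exists (zb (ev y)); apply/ecvP; exact: (Vg_ecv hV).
  case: (hsub _ hr) => [Sr | [r0 | r1]].
  + rewrite eS in Sr; have [_ [v Fv]] := Sr.
    by apply: (hy (cns 1 v)); split.
  + by apply: (hy (cns 2 y)); split.
  + by apply: (hy (cns 3 y)); split.
Qed.

End PartA1.

Section PartA2.
Variables (R : realType) (mu : {measure set cantorB -> \bar R}).
Hypothesis Hmu : coin_tossing mu.

Definition Gopen (F : set (R * baire)) (r : R) (v : baire) (m : nat) :=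
  forall r' v', F (r', v') -> iv R m <= `|r' - r| \/ exists2 i, (i < m)%N & v' i <> v i.

Definition GA2 (F : set (R * baire)) (i : nat) (q : T1 * baire) : Prop :=
  match i with
  | O => Badg (@sR R) NR q.1 q.2
  | S O => Vg (@sR R) NR q.1 /\ Gopen F (lmg (@sR R) q.1) (od q.1.2) (q.2 0%N)
  | _ => Vg (@sR R) NR q.1 /\ ConvW mu q.1.1 (lmg (@sR R) q.1) q.2
  end.

Let sc := @scontR R mu.
Let nc := @NcontR R mu.

Lemma GA2_closed F : forall i, cloE (pP P1) (pC (cv1 mu)) (GA2 F i).
Proof.
move=> [|[|i]] a b Pa hev Pb [c1 c2] /=.
- exact: (Badg_closed sc nc Pa Pb c1 c2 hev).
- have hV : Vg (@sR R) NR b.1 :=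
    Vg_closed sc nc Pa (ev_mono hev (fun k h => proj1 h)) Pb c1.
  have hL := lmg_cont sc nc Pa Pb c1 (ev_mono hev (fun k h => proj1 h)) hV.
  split => //.
  set m := b.2 0%N.
  have [K1 hK1] := c2 0%N.
  have [K2 hK2] := bc_prefix m (bc_re (fun i => i.*2.+1) c1.2).
  move=> r' v' Fr'.
  case: (pselect (exists2 i, (i < m)%N & v' i <> od b.1.2 i)) => [h|h]; [right=> // | left].
  apply: (ge_ecv (ecv_cst r') hL).
  apply: (ev_mono (ev_and hev (ev_and (ex_intro _ K1 hK1) (ex_intro _ K2 hK2)))).
  move=> k [[_ hG] [e1 e2]].
  have := hG r' v' Fr'; rewrite e1 => -[// | [i hi hne]]; exfalso; apply: h; exists i => //.
  by move: hne; rewrite /od (e2 i).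
- have hV : Vg (@sR R) NR b.1 :=
    Vg_closed sc nc Pa (ev_mono hev (fun k h => proj1 h)) Pb c1.
  have hL := lmg_cont sc nc Pa Pb c1 (ev_mono hev (fun k h => proj1 h)) hV.
  split => //.
  exact: (ConvW_close Hmu (A := fun k => (a k).1.1) Pa Pb c1.1 hL c2
    (ev_mono hev (fun k h => proj2 h))).
Qed.

Lemma partA2 (S : set R) : S `<=` `]0, 1[ -> analytic S ->
  Pi12 measurable (malg_conv mu) (RngSup mu S).
Proof.
move=> HS01 [F [cF eS]]; split; first by move=> A [].
exists [set p | measurable p.1.1 /\ sel (GA2 F) p]; split.
  by apply: cloE_closed2; exact: (cloE_sel (@GA2_closed F)).
apply/seteqP; split.
- move=> A [mA nSup]; split => //.
  have [r [Sr nr]] : exists r, S r /\ ~ ranD mu A r.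
    apply: contrapT => h; apply: nSup; split => // r Sr.
    by apply: contrapT => hn; apply: h; exists r.
  have /= := HS01 _ Sr; rewrite in_itv /= => /andP[r0 r1].
  have := Sr; rewrite eS => -[_ [v Fv]].
  set q := fun n => Num.Def.truncn (r * 2%:R ^+ n).
  have hrate : forall k n, (NR (A, mrg q v) k <= n)%N ->
      `|sR R (A, mrg q v) n - r| <= iv R k.*2.+1.
    move=> k n hn; rewrite /sR /= ev_mrg /q.
    apply: (le_trans (trunc_approx n (ltW r0))).
    apply: (le_trans (pow2_le_iv R n)); exact: iv_le hn.
  have [hV hL] := rate_Vg hrate.
  exists (mrg q v) => w [_]; rewrite /sel /=.
  case: (w 0%N) => [|[|i]] /=.
  + by move=> hB; exact: (Badg_notV hB hV).
  + move=> [_ hG]; rewrite od_mrg hL in hG; case: (hG r v Fv).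
    * by rewrite subrr normr0; have := iv_gt0 R (tl w 0%N); lra.
    * by move=> [i _].
  + move=> [_ hC]; apply: nr; rewrite -hL; exact: ConvW_ranD hC.
- move=> A [mA [y hy]]; split => //; move=> [_ hsub].
  have hV : Vg (@sR R) NR (A, y).
    apply: contrapT => nV; have [w hw] := notV_Badg nV.
    by apply: (hy (cns 0 w)); split.
  set r := lmg (@sR R) (A, y).
  have Fr : exists v, F (r, v).
    exists (od y); apply: contrapT => nF.
    have [m hm] := notF_Gopen cF nF.
    by apply: (hy (cns 1 (fun _ => m))); split.
  have Sr : S r by rewrite eS.
  have [u hu] := ranD_ConvW (hsub _ Sr).
  by apply: (hy (cns 2 u)); split.
Qed.

End PartA2.

Section Borel.
Variable R : realType.
Notation S11 := (Sigma11 setT (@real_conv R)).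

Lemma closed_S11 (C : set R) :
  (forall u x, (forall k, C (u k)) -> ecv u x -> C x) -> S11 C.
Proof.
move=> hC; exists [set p | C p.1]; split.
- split => // a y b x hF _ ca _; apply: (hC a) => //; exact/ecvP.
- apply/seteqP; split => [x Cx | x [_ [y Cx]]] //.
  by split => //; exists (fun _ => 0%N).
Qed.

Lemma S11_bigcup (Cs : nat -> set R) : (forall i, S11 (Cs i)) -> S11 (\bigcup_i Cs i).
Proof.
move=> h; have [Fs hF] := choice h.
exists [set p | Fs (p.2 0%N) (p.1, tl p.2)]; split.
- split => // a y b x hy _ ca cy.
  have [K hK] := cy 0%N.
  have cF := (hF (x 0%N)).1.
  apply: (FS_close (a := a) (y := fun k => tl (y k)) cF).
  + by exists K => k hk; have := hy k; rewrite /= (hK k hk).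
  + exact/ecvP.
  + exact: (bc_re S cy).
- apply/seteqP; split.
  + move=> r [i _]; rewrite (hF i).2 => -[_ [v Fv]]; split => //.
    by exists (cns i v).
  + move=> r [_ [y Fy]]; exists (y 0%N) => //; rewrite (hF (y 0%N)).2.
    by split => //; exists (tl y).
Qed.

Lemma S11_bigcap (Cs : nat -> set R) : (forall i, S11 (Cs i)) -> S11 (\bigcap_i Cs i).
Proof.
move=> h; have [Fs hF] := choice h.
exists [set p | forall i, Fs i (p.1, prj i p.2)]; split.
- split => // a y b x hy _ ca cy i.
  exact: ((hF i).1.2 a (fun k => prj i (y k)) b (prj i x) (fun k => hy k i) I ca
    (bc_re (fun j => Cantor.to_nat (i, j)) cy)).
- apply/seteqP; split.
  + move=> r hr; split => //.
    have : forall i, exists v, Fs i (r, v).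
      by move=> i; have := hr i I; rewrite (hF i).2 => -[_ [v Fv]]; exists v.
    move/choice => [vs hvs]; exists (jn vs) => i; rewrite prj_jn; exact: hvs.
  + move=> r [_ [y Fy]] i _; rewrite (hF i).2; split => //; exists (prj i y); exact: Fy.
Qed.

Lemma S11_setU (A B : set R) : S11 A -> S11 B -> S11 (A `|` B).
Proof.
move=> hA hB.
have -> : A `|` B = \bigcup_i (if i is O then A else B).
  apply/seteqP; split => [x [a|b]|x [[|i] _ h]]; [by exists 0%N|by exists 1%N|by left|by right].
by apply: S11_bigcup => -[|i].
Qed.

Lemma S11_ge c : S11 [set x : R | c <= x].
Proof.
apply: closed_S11 => u x hu cu /=.
have H : exists K, forall k, (K <= k)%N -> c <= u k + 0.
  by exists 0%N => k _; rewrite addr0; exact: hu.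
by have := le_ecv (ecv_cst c) cu H; rewrite addr0.
Qed.

Lemma S11_le c : S11 [set x : R | x <= c].
Proof.
apply: closed_S11 => u x hu cu /=.
have H : exists K, forall k, (K <= k)%N -> u k <= c + 0.
  by exists 0%N => k _; rewrite addr0; exact: hu.
by have := le_ecv cu (ecv_cst c) H; rewrite addr0.
Qed.

Lemma S11_setI (A B : set R) : S11 A -> S11 B -> S11 (A `&` B).
Proof.
move=> hA hB.
have -> : A `&` B = \bigcap_i (if i is O then A else B).
  apply/seteqP; split => [x [a b] [|i] _ //|x h]; split; [exact: (h 0%N) | exact: (h 1%N)].
by apply: S11_bigcap => -[|i].
Qed.

Lemma ar1 (a x t : R) : t <= x - a -> a + t <= x. Proof. lra. Qed.
Lemma ar2 (a x t : R) : a + t <= x -> 0 < t -> a < x. Proof. lra. Qed.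
Lemma ar3 (a x : R) : a < x -> 0 < x - a. Proof. lra. Qed.
Lemma ar4 (a x t : R) : a + t <= x -> x <= a -> 0 < t -> False. Proof. lra. Qed.
Lemma ar5 (a x : R) : x <= a -> a < x -> False. Proof. lra. Qed.

Lemma S11_oc a b : S11 `]a, b]%classic.
Proof.
have -> : `]a, b]%classic = \bigcup_m ([set x : R | a + iv R m <= x] `&` [set x : R | x <= b]).
  apply/seteqP; split => x /=.
  - rewrite in_itv /= => /andP[ax xb].
    have [m hm] : exists m, iv R m <= x - a by apply: iv_small; exact: ar3.
    exists m => //; split => //=; exact: ar1.
  - move=> [m _ [h1 h2]]; rewrite in_itv /=; apply/andP; split => //.
    exact: ar2 h1 (iv_gt0 R m).
apply: S11_bigcup => m; apply: S11_setI; [exact: S11_ge | exact: S11_le].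
Qed.

Lemma S11_ocC a b : S11 (~` `]a, b]%classic).
Proof.
have -> : ~` `]a, b]%classic = [set x : R | x <= a] `|` \bigcup_m [set x : R | b + iv R m <= x].
  apply/seteqP; split => x /=.
  - rewrite in_itv /= => hn.
    have : ~~ (a < x) || ~~ (x <= b) by rewrite -negb_and; apply/negP.
    rewrite -leNgt -ltNge => /orP[h|h].
    + by left.
    + have [m hm] : exists m, iv R m <= x - b by apply: iv_small; exact: ar3.
      right; exists m => //=; exact: ar1.
  - rewrite in_itv /= => -[h|[m _ h]] /andP[h1 h2].
    + exact: ar5 h h1.
    + exact: ar4 h h2 (iv_gt0 R m).
apply: S11_setU; first exact: S11_le.
by apply: S11_bigcup => m; exact: S11_ge.
Qed.

Lemma borel_S11 (B : set R) : measurable B -> S11 B.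
Proof.
move=> hB.
pose D := [set X : set R | S11 X /\ S11 (~` X)].
suff : D B by case.
apply: hB; split.
- split.
  + split; last by rewrite setC0; apply: closed_S11.
    by apply: closed_S11 => u x hu; have := hu 0%N.
  + move=> X [h1 h2]; rewrite /D /= setTD setCK; by split.
  + move=> Xs hX; split; first by apply: S11_bigcup => i; exact: (hX i).1.
    rewrite setC_bigcup; apply: S11_bigcap => i; exact: (hX i).2.
- move=> X /= hX.
  have [-> | [[x1 x2] /= _ ->]] : X = set0 \/ exists2 x : R * R, x.1 < x.2 & X = `]x.1, x.2]%classic.
    exact/ocitvP.
  + split; last by rewrite setC0; apply: closed_S11.
    by apply: closed_S11 => u x hu; have := hu 0%N.
  + by split; [exact: S11_oc | exact: S11_ocC].
Qed.

End Borel.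

Section PartBC.
Variables (R : realType) (mu : {measure set cantorB -> \bar R}).
Hypothesis Hmu : coin_tossing mu.

Let sc := scont1 Hmu.
Let nc := @Ncont1 R mu.

Definition GB (Fc : set (R * baire)) (p : T1) : Prop :=
  Vg (s1 mu) N1 (p.1, ev p.2) /\ Fc (lmg (s1 mu) (p.1, ev p.2), od p.2).

Lemma GB_closed Fc : closed1 setT (@real_conv R) Fc -> cloE P1 (cv1 mu) (GB Fc).
Proof.
move=> cF a b Pa hev Pb [c1 c2].
pose a' k := ((a k).1, ev (a k).2).
have Pa' : forall k, P1 (a' k) by move=> k; exact: Pa k.
have Pb' : P1 (b.1, ev b.2) := Pb.
have c' : cv1 mu a' (b.1, ev b.2) by split => //; exact: (bc_re (fun i => i.*2) c2).
have hV : Vg (s1 mu) N1 (b.1, ev b.2) :=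
  Vg_closed sc nc Pa' (ev_mono hev (fun k h => proj1 h)) Pb' c'.
split => //.
apply: (FS_close (a := fun k => lmg (s1 mu) (a' k)) (y := fun k => od (a k).2) cF
   (ev_mono hev (fun k h => proj2 h))).
- exact: (lmg_cont sc nc Pa' Pb' c' (ev_mono hev (fun k h => proj1 h)) hV).
- exact: (bc_re (fun i => i.*2.+1) c2).
Qed.

Lemma partB (S : set R) : measurable S -> Pi11 measurable (malg_conv mu) (RngSub mu S).
Proof.
move=> mS; split; first by move=> A [].
have mC : measurable (~` (S `|` [set 0; 1])).
  by apply: measurableC; apply: measurableU => //; apply: measurableU.
have [Fc [cFc eC]] := borel_S11 mC.
exists [set p | measurable p.1 /\ GB Fc p]; split.
  by apply: cloE_closed1; exact: GB_closed.
apply/seteqP; split.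
- move=> A [mA nSub]; split => //.
  have [r [hr nr]] : exists r, ranD mu A r /\ ~ (S `|` [set 0; 1]) r.
    apply: contrapT => h; apply: nSub; split => // r hr.
    by apply: contrapT => hn; apply: h; exists r.
  have [u hu] := ranD_ConvW hr.
  have [hV hL] := ConvW_Vg hu.
  have : (~` (S `|` [set 0; 1])) r by [].
  rewrite eC => -[_ [v Fv]].
  exists (mrg (mrg (ev u) (fun k => od u k.*2.+1)) v); split => //.
  rewrite /GB /= ev_mrg od_mrg hL; split => //.
- move=> A [mA [y [_ [hV hF]]]]; split => //; move=> [_ hsub].
  have hr : ranD mu A (lmg (s1 mu) (A, ev y)).
    by exists (zb (ev (ev y))); apply/ecvP; exact: (Vg_ecv hV).
  have : (~` (S `|` [set 0; 1])) (lmg (s1 mu) (A, ev y)).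
    by rewrite eC; split => //; exists (od y).
  by apply; apply: hsub.
Qed.

Lemma partC (S : set R) : countable S -> Sigma11 measurable (malg_conv mu) (RngSup mu S).
Proof.
move=> cS.
case: (pselect (exists r, S r)) => [[r0 Sr0] | nS]; last first.
  exists [set p | measurable p.1]; split.
  - by split => [p //|a y b x _ Pb _ _].
  - apply/seteqP; split => [A [mA _] | A [mA _]]; first by split => //; exists (fun _ => 0%N).
    by split => // r Sr; exfalso; apply: nS; exists r.
have [f finj] := countable_injP _ cS.
have he : forall i : nat, exists r, S r /\ forall r', S r' -> f r' = i -> r = r'.
  move=> i; case: (pselect (exists r', S r' /\ f r' = i)) => [[r' [Sr' fr']] | nr].
  - exists r'; split => // r'' Sr'' fr''.
    by apply: finj; [exact: mem_set | exact: mem_set | rewrite fr' fr''].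
  - exists r0; split => // r' Sr' fr'; exfalso; apply: nr; by exists r'.
have [e he'] := choice he.
have eS : forall r, S r -> e (f r) = r by move=> r Sr; exact: (he' (f r)).2 r Sr erefl.
exists [set p | measurable p.1 /\ forall i, ConvW mu p.1 (e i) (prj i p.2)]; split.
  apply: cloE_closed1; apply: cloE_all => i a b Pa hev Pb [c1 c2].
  exact: (ConvW_close Hmu (A := fun k => (a k).1) Pa Pb c1 (ecv_cst (e i))
    (bc_re (fun j => Cantor.to_nat (i, j)) c2) hev).
apply/seteqP; split.
- move=> A [mA hsub]; split => //.
  have : forall i, exists u, ConvW mu A (e i) u.
    move=> i; apply: ranD_ConvW; apply: hsub; exact: (he' i).1.
  move/choice => [us hus]; exists (jn us); split => // i; rewrite prj_jn; exact: hus.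
- move=> A [mA [w [_ hw]]]; split => // r Sr.
  rewrite -(eS r Sr); exact: ConvW_ranD (hw (f r)).
Qed.

End PartBC.


Unset Implicit Arguments.

Theorem lemma3p7 (R : realType) (mu : {measure set cantorB -> \bar R})
  (Hmu : coin_tossing mu) (S : set R) (HS01 : S `<=` `]0, 1[)
  (HS : analytic S) :
  (Pi12 measurable (malg_conv mu) (RngSub mu S) /\
   Pi12 measurable (malg_conv mu) (RngSup mu S)) /\
  (measurable S -> Pi11 measurable (malg_conv mu) (RngSub mu S)) /\
  (countable S -> Sigma11 measurable (malg_conv mu) (RngSup mu S)).
Proof.
split; first split.
- exact: (partA1 Hmu HS).
- exact: (partA2 Hmu HS01 HS).
split.
- exact: (partB Hmu).
- exact: (partC Hmu).
Qed.
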